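(* Let $(X,d)$ be a nonempty homogeneous compact metric space of diameter $D$, and let $m$ be a Borel probability measure on $X$ that is invariant under all isometries of $X$. Let $A=\int_{X\times X} d(x,y)\,d(m\times m)(x,y)$ and let $\mu = 1-(m\times m)(\Delta)$, where $\Delta=\{(x,x):x\in X\}$ is the diagonal. Then $$\frac{D}{2}\le A\le \mu D.$$ Furthermore, $\mu=1$ if every point of $X$ has $m$-measure zero, and $\mu=1-\frac1n$ if $X$ is finite with $|X|=n$.
   Context: A metric space is homogeneous if its isometry group acts transitively on its points. The diameter is $D=\sup_{x,y\in X} d(x,y)$. *)

(* Defs.v *)
From HB Require Import structures.
From mathcomp Require Import all_boot all_order all_algebra.
From mathcomp Require Import all_classical all_reals all_analysis.
Set Implicit Arguments. Unset Strict Implicit. Unset Printing Implicit Defensive.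
Import Order.TTheory GRing.Theory Num.Theory.
Local Open Scope classical_set_scope.
Local Open Scope ring_scope.

Section MetricDefs.
Context {R : realType} {X : Type} (d : X -> X -> R).

Definition is_metric : Prop :=
  (forall x y, 0 <= d x y) /\
  (forall x y, d x y = 0 <-> x = y) /\
  (forall x y, d x y = d y x) /\
  (forall x y z, d x z <= d x y + d y z).

Definition dball (x : X) (r : R) : set X := [set y | d x y < r].
Definition dopen (U : set X) : Prop :=
  forall x, U x -> exists2 r : R, 0 < r & dball x r `<=` U.

Definition dcompact : Prop :=
  forall (I : Type) (U : I -> set X),
    (forall i, dopen (U i)) -> (forall x, exists i, U i x) ->
    exists (n : nat) (g : 'I_n -> I), forall x, exists k, U (g k) x.

Definition is_isometry (f : X -> X) : Prop :=
  (forall x y, d (f x) (f y) = d x y) /\ bijective f.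

Definition homogeneous : Prop :=
  forall x y, exists f, is_isometry f /\ f x = y.

Definition diameter : R := sup [set d z.1 z.2 | z in [set: X * X]].

End MetricDefs.

(* the diagonal of X x X is the library's classical_sets.diagonal *)

(* Main.v *)
Require Import Defs.
From HB Require Import structures.
From mathcomp Require Import all_boot all_order all_algebra.
From mathcomp Require Import all_classical all_reals all_analysis.
From mathcomp Require Import lra measurable_realfun.
Import Order.TTheory GRing.Theory Num.Theory.
Local Open Scope classical_set_scope.
Local Open Scope ring_scope.

Lemma sum_const_ord (V : nmodType) n (x : V) : \sum_(i < n) x = x *+ n.
Proof. by elim: n => [|n IH]; rewrite ?big_ord0 // big_ord_recr /= IH mulrSr. Qed.

Lemma bigU_mem (I : eqType) (T : Type) (r : seq I) (F : I -> set T) i x :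
  i \in r -> F i x -> (\big[setU/set0]_(j <- r) F j) x.
Proof.
elim: r => // a r IH; rewrite in_cons big_cons => /orP[/eqP->|ir] Fx;
  [by left | by right; apply: IH].
Qed.

Section Metric.
Context {R : realType} {dX : measure_display} {X : measurableType dX}
  {ds : X -> X -> R}.
Hypothesis dm : is_metric ds.
Hypothesis mE : @measurable _ X = <<s dopen ds >>.
Hypothesis cpt : dcompact ds.

Lemma d_ge0 x y : 0 <= ds x y. Proof. by case: dm. Qed.
Lemma d_eq0 x y : ds x y = 0 <-> x = y. Proof. by case: dm => _ []. Qed.
Lemma d_sym x y : ds x y = ds y x. Proof. by case: dm => _ [_ []]. Qed.
Lemma d_tri x y z : ds x z <= ds x y + ds y z. Proof. by case: dm => _ [_ [_]]. Qed.
Lemma d_xx x : ds x x = 0. Proof. by apply/d_eq0. Qed.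

Lemma dopen_ball x r : dopen ds (dball ds x r).
Proof.
move=> y; rewrite /dball /= => hy; exists (r - ds x y); first by rewrite subr_gt0.
move=> z; rewrite /dball /= => hz.
have := d_tri x y z; rewrite ltrBrDl in hz => h.
exact: (le_lt_trans h).
Qed.

Lemma dopen_meas U : dopen ds U -> measurable U.
Proof. by move=> hU; rewrite mE; apply: sub_sigma_algebra. Qed.

Lemma mball x r : measurable (dball ds x r).
Proof. exact/dopen_meas/dopen_ball. Qed.

Lemma mset1 (x : X) : measurable [set x].
Proof.
rewrite -[[set x]]setCK; apply: measurableC; apply: dopen_meas.
move=> y /= hy; exists (ds y x).
  by rewrite lt_neqAle d_ge0 andbT eq_sym; apply/eqP => /d_eq0.
by move=> z; rewrite /dball /= => hz zx; rewrite zx ltxx in hz.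
Qed.

Lemma d_bounded (x0 : X) : exists M, forall x y, ds x y <= M.
Proof.
have cov : forall x, exists i : nat, dball ds x0 i%:R x.
  by move=> x; exists (Num.Def.archi_bound (ds x0 x)); rewrite /dball /= archi_boundP // d_ge0.
have [n [g hg]] := @cpt nat (fun k => dball ds x0 k%:R) (fun k => dopen_ball x0 k%:R) cov.
pose N := \max_(k < n) g k.
have hb x : ds x0 x <= N%:R.
  have [k hk] := hg x; rewrite /dball /= in hk.
  by apply/ltW/(lt_le_trans hk); rewrite ler_nat; apply: leq_bigmax.
exists (N%:R + N%:R) => x y.
by apply: (le_trans (d_tri x x0 y)); rewrite d_sym; apply: lerD.
Qed.

Definition dset := [set ds z.1 z.2 | z in [set: X * X]].

Lemma dset_sup (x0 : X) : has_sup dset.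
Proof.
split; first by exists (ds x0 x0), (x0, x0).
have [M hM] := d_bounded x0; exists M => _ [z _ <-]; exact: hM.
Qed.

Lemma le_diam (x y : X) : ds x y <= diameter ds.
Proof. by apply: (sup_upper_bound (dset_sup x)); exists (x, y). Qed.

Lemma diam_le (x0 : X) M : (forall x y, ds x y <= M) -> diameter ds <= M.
Proof.
move=> hM; apply: ge_sup; first by exists (ds x0 x0), (x0, x0).
by move=> _ [z _ <-]; exact: hM.
Qed.

Lemma net (k : nat) : exists n (p : 'I_n -> X), forall x, exists i, ds (p i) x < k.+1%:R^-1.
Proof.
have cov : forall x, exists i : X, dball ds i k.+1%:R^-1 x.
  by move=> x; exists x; rewrite /dball /= d_xx invr_gt0 ltr0n.
have [n [g hg]] := @cpt X (fun y => dball ds y k.+1%:R^-1) (fun y => dopen_ball y k.+1%:R^-1) cov.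
by exists n, g.
Qed.

Lemma mlt r : measurable [set z : X * X | ds z.1 z.2 < r].
Proof.
pose e (k : nat) : R := k.+1%:R^-1.
have : forall k, exists np : {n : nat & 'I_n -> X},
    forall x, exists i, ds (projT2 np i) x < e k.
  by move=> k; have [n [p hp]] := net k; exists (existT _ n p).
case/choice => F hF.
pose p k := projT2 (F k).
pose S k (ij : 'I_(projT1 (F k)) * 'I_(projT1 (F k))) : set (X * X) :=
  if ds (p k ij.1) (p k ij.2) < r - (e k + e k)
  then dball ds (p k ij.1) (e k) `*` dball ds (p k ij.2) (e k) else set0.
have -> : [set z : X * X | ds z.1 z.2 < r] =
    \bigcup_k \bigcup_(ij in [set: 'I_(projT1 (F k)) * 'I_(projT1 (F k))]) S k ij.
  apply/seteqP; split.
  - move=> [x y] /= hxy.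
    have hpos : 0 < (r - ds x y) / 4 by apply: divr_gt0; lra.
    have [k hk] := ltr_add_invr hpos; rewrite add0r -/(e k) in hk.
    have [i hi] := hF k x; have [j hj] := hF k y.
    exists k => //; exists (i, j) => //; rewrite /S /=.
    have t1 := d_tri (p k i) x (p k j); have t2 := d_tri x y (p k j).
    rewrite (d_sym (p k j) y) in hj.
    have hc : ds (p k i) (p k j) < r - (e k + e k) by lra.
    by rewrite hc /setX /dball /=; split => //; rewrite d_sym.
  - move=> [x y] [k _ [ij _]]; rewrite /S; case: ifP => // hc [/= h1 h2].
    have t1 := d_tri x (p k ij.1) y; have t2 := d_tri (p k ij.1) (p k ij.2) y.
    rewrite /dball /= d_sym in h1; rewrite /dball /= in h2; lra.
apply: bigcupT_measurable => k; apply: fin_bigcup_measurable.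
  exact: finite_finset.
move=> ij _; rewrite /S; case: ifP => _ //; apply: measurableX; exact: mball.
Qed.

Lemma mR : @measurable _ R = <<s @measurable_realfun.RGenInftyO.G R>>.
Proof. exact: (@measurable_realfun.RGenInftyO.measurableE R). Qed.

Lemma mfun_d : measurable_fun [set: X * X] (fun z => ds z.1 z.2).
Proof.
apply: (@measurability _ _ (X * X)%type R setT _ _ mR).
move=> _ [_ [r ->] <-]; rewrite setTI.
rewrite (_ : _ @^-1` _ = [set z : X * X | ds z.1 z.2 < r]); first exact: mlt.
by apply/seteqP; split => z; rewrite /= in_itv.
Qed.

Lemma mfun_d1 (a : X) : measurable_fun [set: X] (fun y => ds a y).
Proof.
apply: (@measurability _ _ X R setT _ _ mR).
move=> _ [_ [r ->] <-]; rewrite setTI.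
rewrite (_ : _ @^-1` _ = dball ds a r); first exact: mball.
by apply/seteqP; split => z; rewrite /= in_itv.
Qed.

End Metric.

Section Main.
Context (R : realType) (dX : measure_display) (X : measurableType dX)
  (ds : X -> X -> R) (m : probability X R).
Hypothesis dm : is_metric ds.
Hypothesis mE : @measurable _ X = <<s dopen ds >>.
Hypothesis cpt : dcompact ds.
Hypothesis hom : homogeneous ds.
Hypothesis inv : forall f : X -> X, is_isometry ds f ->
     forall B : set X, measurable B -> m (f @^-1` B) = m B.

Lemma iso_mfun f : is_isometry ds f -> measurable_fun [set: X] f.
Proof.
move=> [hf _]; apply: (@measurability _ _ X X setT f (dopen ds) mE).
move=> _ [U hU <-]; rewrite setTI; apply: (dopen_meas mE).
move=> x /= hx; have [r r0 hr] := hU (f x) hx; exists r => // y hy.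
by apply: hr; rewrite /dball /= hf.
Qed.

Local Open Scope ereal_scope.

Definition c x := \int[m]_y (ds x y)%:E.

Lemma mfun_d1E (a : X) : measurable_fun [set: X] (EFin \o ds a).
Proof. exact/measurable_EFinP/mfun_d1. Qed.

Lemma c_iso f x : is_isometry ds f -> c (f x) = c x.
Proof.
move=> hf; rewrite /c.
transitivity (\int[m]_(y in f @^-1` setT) ((EFin \o ds (f x)) \o f) y); last first.
  rewrite preimage_setT; apply: eq_integral => y _ /=.
  by case: hf => ->.
rewrite -(ge0_integral_pushforward (iso_mfun _ hf) m measurableT (mfun_d1E (f x))); last first.
  by move=> y _; rewrite lee_fin d_ge0.
apply: eq_measure_integral; first exact: iso_mfun.
by move=> mf A mA _ /=; apply/esym; exact: inv.
Qed.

Lemma c_const x y : c x = c y.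
Proof. by have [f [hf <-]] := hom y x; rewrite c_iso. Qed.

Lemma c_bounds x : 0 <= c x <= (diameter ds)%:E.
Proof.
apply/andP; split; first by apply: integral_ge0 => y _; rewrite lee_fin d_ge0.
apply: (@le_trans _ _ (\int[m]_y (cst (diameter ds)%:E) y)).
  apply: ge0_le_integral => //.
  - by move=> y _; rewrite lee_fin d_ge0.
  - exact: mfun_d1E.
  - by move=> y _; rewrite lee_fin (le_diam dm cpt).
by rewrite integral_cst // [X in _ * X](_ : _ = 1) ?mule1 //; exact: probability_setT.
Qed.


Lemma A_eq (x0 : X) : \int[m \x m]_z (ds z.1 z.2)%:E = c x0.
Proof.
rewrite (fubini_tonelli1 (fun z => (ds z.1 z.2)%:E)); first last.
- by move=> z; rewrite lee_fin d_ge0.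
- by apply: measurableT_comp => //; exact: (mfun_d dm mE cpt).
transitivity (\int[m]_x (cst (c x0)) x).
  by apply: eq_integral => x _; exact: c_const.
by rewrite integral_cst // [X in _ * X](_ : _ = 1) ?mule1 //; exact: probability_setT.
Qed.


Lemma part1 (x0 : X) : ((diameter ds) / 2)%:E <= \int[m \x m]_z (ds z.1 z.2)%:E.
Proof.
rewrite (A_eq x0).
have /andP[h0 hD] := c_bounds x0.
have fc : c x0 \is a fin_num by rewrite ge0_fin_numE // (le_lt_trans hD) // ltry.
set a := fine (c x0).
have ca : c x0 = a%:E by rewrite /a fineK.
have key x y : (ds x y)%:E <= c x + c y.
  have -> : c x + c y = \int[m]_z ((ds x z)%:E + (ds y z)%:E).
    by rewrite ge0_integralD //; (move=> z _; rewrite lee_fin d_ge0) || exact: mfun_d1E.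
  apply: (@le_trans _ _ (\int[m]_z (cst (ds x y)%:E) z)).
    by rewrite integral_cst // [X in _ * X](_ : _ = 1) ?mule1 //; exact: probability_setT.
  apply: ge0_le_integral => //.
  - by move=> z _; rewrite lee_fin d_ge0.
  - by apply: emeasurable_funD; exact: mfun_d1E.
  - move=> z _ /=; rewrite -EFinD lee_fin (d_sym dm y z); exact: d_tri.
have key2 x y : (ds x y <= a + a)%R.
  by have := key x y; rewrite (c_const x x0) (c_const y x0) ca -EFinD lee_fin.
have hd : (diameter ds <= a + a)%R := diam_le x0 _ key2.
by rewrite ca lee_fin; lra.
Qed.


Lemma mdiag : measurable (@diagonal X).
Proof.
have := mfun_d dm mE cpt measurableT _ (measurable_set1 (0 : R)).
rewrite setTI; congr measurable.
apply/seteqP; split => z /=; first by move/(d_eq0 dm).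
by move=> ->; rewrite d_xx.
Qed.

Lemma part2 (x0 : X) : \int[m \x m]_z (ds z.1 z.2)%:E <=
  (1 - (m \x m) (@diagonal X)) * (diameter ds)%:E.
Proof.
have D0 : (0 <= diameter ds)%R.
  by apply: (le_trans (d_ge0 dm x0 x0)); exact: le_diam.
have mi : measurable_fun [set: X * X] (fun z => (\1_(~` (@diagonal X)) z : R)).
  by apply: measurable_indic; apply: measurableC; exact: mdiag.
apply: (@le_trans _ _ (\int[m \x m]_z ((diameter ds * \1_(~` (@diagonal X)) z)%:E))).
  apply: ge0_le_integral => //.
  - by move=> z _; rewrite lee_fin d_ge0.
  - by apply: measurableT_comp => //; exact: (mfun_d dm mE cpt).
  - by apply: measurableT_comp => //; apply: measurable_funM => //; exact: measurable_cst.
  - move=> [x y] _; rewrite lee_fin indicE /=.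
    have [->|nxy] := pselect (x = y); first by rewrite (d_xx dm) mulr_ge0 ?ler0n.
    rewrite (_ : ((x, y) \in ~` diagonal) = true) ?mulr1; first exact: le_diam.
    by apply/mem_set.
rewrite (_ : \int[m \x m]_z ((diameter ds * \1_(~` (@diagonal X)) z)%:E) =
   \int[m \x m]_z ((diameter ds)%:E * (\1_(~` (@diagonal X)) z)%:E)); last first.
  by apply: eq_integral => z _; rewrite EFinM.
have i0 : forall z, [set: X * X] z -> 0 <= (\1_(~` (@diagonal X)) z : R)%:E.
  by move=> z hz; rewrite lee_fin indicE.
have mi' : measurable_fun [set: X * X] (fun z => (\1_(~` (@diagonal X)) z : R)%:E).
  by apply: measurableT_comp => //; exact: mi.
rewrite (ge0_integralZl_EFin _ measurableT i0 mi' D0).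
rewrite integral_indic //; last exact: (measurableC mdiag).
rewrite setIT [X in _ * X <= _](_ : _ = 1 - (m \x m) (@diagonal X)).
  by rewrite muleC.
exact: (probability_setC _ mdiag).
Qed.


Lemma diag_eq : (m \x m) (@diagonal X) = \int[m]_x m [set x].
Proof.
rewrite /product_measure1 /=; apply: eq_integral => x _ /=.
congr (m _); apply/seteqP; split => y /=; rewrite /xsection /= in_setE /diagonal /=.
  by move->.
by move->.
Qed.

Lemma part3 : (forall x : X, m [set x] = 0) -> 1 - (m \x m) (@diagonal X) = 1.
Proof. by move=> h; rewrite diag_eq integral0_eq ?sube0 // => x _; exact: h. Qed.

Lemma part4 (x0 : X) n (f : 'I_n -> X) : bijective f ->
  1 - (m \x m) (@diagonal X) = (1 - n%:R^-1)%:E.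
Proof.
move=> bf.
have sing x y : m [set x] = m [set y].
  have [g [hg gx]] := hom x y.
  rewrite -(inv _ hg _ (mset1 dm mE y)); congr (m _); apply/seteqP; split => z /=.
    by move->.
  by move=> gz; apply: (bij_inj hg.2); rewrite gz gx.
have n0 : (0 < n)%N.
  by case: bf => g _ _; exact: (leq_ltn_trans (leq0n _) (ltn_ord (g x0))).
have /andP[s0 s1] : 0 <= m [set x0] <= 1.
  by rewrite measure_ge0 /=; exact: probability_le1 (mset1 dm mE x0).
have fs : m [set x0] \is a fin_num by rewrite ge0_fin_numE // (le_lt_trans s1) // ltey.
set r := fine (m [set x0]).
have sr : m [set x0] = r%:E by rewrite /r fineK.
have tot : [set: X] = \big[setU/set0]_(i < n) [set f i].
  apply/seteqP; split => x _ //; case: bf => g fg gf.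
  by apply: (@bigU_mem _ _ _ _ (g x)); [exact: mem_index_enum | rewrite /= gf].
have hsum : (1 : \bar R) = (r *+ n)%:E.
  transitivity (m [set: X]); first exact: (esym (probability_setT m)).
  rewrite tot measure_bigsetU_ord; last 2 first.
  - by move=> i; exact: (mset1 dm mE).
  - move=> i j _ _ [z [/= -> /(bij_inj bf)]] //.
  rewrite EFin_natmul; transitivity (\sum_(i < n) r%:E)%R; last exact: sum_const_ord.
  by apply: eq_bigr => i _; rewrite -sr; exact: sing.
have rn : (r = n%:R^-1)%R.
  move: hsum => [] /esym h.
  have h' : (r * n%:R = 1)%R by rewrite mulr_natr.
  have nz : (n%:R != 0 :> R)%R by rewrite pnatr_eq0 -lt0n.
  by rewrite -(mulfK nz r) h' mul1r.
rewrite diag_eq.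
transitivity (1 - \int[m]_x (cst r%:E) x).
  by congr (_ - _); apply: eq_integral => x _; rewrite (sing x x0) sr.
by rewrite integral_cst // [X in _ * X](_ : _ = 1) ?mule1 ?rn //; exact: probability_setT.
Qed.

End Main.

Local Open Scope ereal_scope.

Theorem theorem1p2 (R : realType) (dX : measure_display) (X : measurableType dX)
  (d : X -> X -> R) (m : probability X R) :
  is_metric d ->
  (* the measurable sets of X are exactly the Borel sets of the metric d *)
  @measurable _ X = <<s dopen d >> ->
  inhabited X ->
  homogeneous d ->
  dcompact d ->
  (* m is invariant under all isometries *)
  (forall f : X -> X, is_isometry d f ->
     forall B : set X, measurable B -> m (f @^-1` B) = m B) ->
  let D := diameter d in
  let A := \int[m \x m]_z (d z.1 z.2)%:E in
  let mu := 1 - (m \x m) (@diagonal X) in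
  [/\ (D / 2)%:E <= A, A <= mu * D%:E,
      (forall x : X, m [set x] = 0) -> mu = 1
    & forall (n : nat) (f : 'I_n -> X), bijective f ->
        mu = (1 - n%:R^-1)%:E].
Proof.
move=> dm mE [x0] hom cpt inv D A mu; rewrite /D /A /mu.
split.
- exact: (part1 _ _ _ _ _ dm mE cpt hom inv x0).
- exact: (part2 _ _ _ _ m dm mE cpt x0).
- exact: part3.
- move=> n f bf; exact: (part4 _ _ _ _ m dm mE hom inv x0 _ _ bf).
Qed.
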